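(* Let $\alpha=2\sqrt7-4$. For every $\varepsilon>0$ and every balanced tetrahedral erasure channel $W$ with $Q(W)>0$, there exists an integer $m>0$ such that for all $n\ge m$, every $n$th-generation descendant $W'$ of $W$ satisfies $Q(W')\ge\alpha-\varepsilon$ (i.e. $Q(W_n)\ge\alpha-\varepsilon$ for all $n\ge m$).
   Context: $\mathrm{TEC}(p,q,r,s,t)$ denotes a tetrahedral erasure channel with parameters $p,q,r,s,t\ge0$ summing to $1$. Its entropy is $H=\frac{q+r+s}{2}+t$, its edge mass is $E=q+r+s$, and its Quetelet index is $Q=E/(H(1-H))$ (defined when $0<H<1$). It is balanced if $q=r=s$. For $W=\mathrm{TEC}(p,q,r,s,t)$, the serial child is $W^{s}=\mathrm{TEC}(p^2,\ ps+sq+qp,\ pq+qr+rp,\ pr+rs+sp,\ 1-\text{(sum of the other four)})$ and the parallel child is $W^{p}=\mathrm{TEC}(1-\text{(sum of the other four)},\ ts+sq+qt,\ tq+qr+rt,\ tr+rs+st,\ t^2)$. The $0$th-generation descendant of $W$ is $W$; the $n$th-generation descendants are the children of the $(n-1)$th-generation descendants; $W_n$ denotes a random $n$th-generation descendant. *)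

(* Defs.v *)
From mathcomp Require Import all_boot all_order all_algebra.
From mathcomp Require Import reals.
Set Implicit Arguments. Unset Strict Implicit. Unset Printing Implicit Defensive.
Import Order.TTheory GRing.Theory Num.Theory.
Local Open Scope ring_scope.

Section TECdefs.
Variable R : realType.

Record tec := TEC { tp : R; tq : R; tr : R; ts : R; tt : R }.

Definition valid_tec (W : tec) : Prop :=
  0 <= tp W /\ 0 <= tq W /\ 0 <= tr W /\ 0 <= ts W /\ 0 <= tt W /\
  tp W + tq W + tr W + ts W + tt W = 1.

Definition tec_H (W : tec) : R := (tq W + tr W + ts W) / 2 + tt W.
Definition tec_E (W : tec) : R := tq W + tr W + ts W.
(* Quetelet index; only meaningful when 0 < H < 1 *)
Definition tec_Q (W : tec) : R := tec_E W / (tec_H W * (1 - tec_H W)).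

Definition balanced (W : tec) : Prop := tq W = tr W /\ tr W = ts W.

Definition serial_child (W : tec) : tec :=
  let: TEC p q r s t := W in
  let p' := p ^+ 2 in
  let q' := p * s + s * q + q * p in
  let r' := p * q + q * r + r * p in
  let s' := p * r + r * s + s * p in
  TEC p' q' r' s' (1 - (p' + q' + r' + s')).

Definition parallel_child (W : tec) : tec :=
  let: TEC p q r s t := W in
  let q' := t * s + s * q + q * t in
  let r' := t * q + q * r + r * t in
  let s' := t * r + r * s + s * t in
  let t' := t ^+ 2 in
  TEC (1 - (q' + r' + s' + t')) q' r' s' t'.

Inductive descendant (W : tec) : nat -> tec -> Prop :=
  | desc0 : descendant W 0 W
  | descS : forall n V, descendant W n V -> descendant W n.+1 (serial_child V)
  | descP : forall n V, descendant W n V -> descendant W n.+1 (parallel_child V).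

End TECdefs.

(* Main.v *)
Require Import Defs.
From mathcomp Require Import all_boot all_order all_algebra.
From mathcomp Require Import reals.
From mathcomp Require Import ring lra.
Import Order.TTheory GRing.Theory Num.Theory.
Local Open Scope ring_scope.
Set Implicit Arguments. Unset Strict Implicit.
Section S.
Variable R : realType.
Definition dlt (x : R) := 12 - 8*x - x^2.

Lemma core_id (a Q : R) : let b := 1 - a in let e := Q*a*b in
  let a1 := a^2 - e^2/12 in let e1 := 2*a*e - 2*e^2/3 in
  let D := (1-Q^2*b^2/12)*(1+a+Q^2*a^2*b/12) in
  let F := dlt Q/12 + Q^2*b*(2-b)/6 + Q^4*a^2*b^2/144 in
  [/\ a1 = a^2 * (1-Q^2*b^2/12), 1 - a1 = b*(1+a+Q^2*a^2*b/12),
      e1 = 2*Q*a^2*b*(1-Q*b/3) & 2*(1-Q*b/3) - D = b*F].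
Proof. rewrite /dlt /=; split; by field. Qed.

Lemma core_gain (a Q th : R) : let b := 1 - a in let e := Q*a*b in
  let a1 := a^2 - e^2/12 in let e1 := 2*a*e - 2*e^2/3 in
  0 < a -> 0 < b -> 0 <= Q -> Q*b <= 2 -> Q*a <= 2 -> Q <= th -> 0 <= dlt th ->
  Q*(1 + dlt th/36*b) * (a1*(1-a1)) <= e1.
Proof.
move=> b e a1 e1 a0 b0 Q0 u2 v2 Qth dth.
have hab : b = 1 - a by []. have hb1 : b < 1 by lra. have ha1 : a < 1 by lra.
have [h1 h2 h3 h4] := core_id a Q.
rewrite -/b -/e -/a1 -/e1 in h1 h2 h3 h4.
set D := (1-Q^2*b^2/12)*(1+a+Q^2*a^2*b/12) in h4.
set F := dlt Q/12 + Q^2*b*(2-b)/6 + Q^4*a^2*b^2/144 in h4.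
have key : e1 - Q*(1 + dlt th/36*b) * (a1*(1-a1)) = Q*a^2*b*(b*F - dlt th/36*b*D).
  rewrite h2 h1 h3 -h4 /D; ring.
have hF : dlt th / 12 <= F.
  rewrite /F /dlt.
  have : 0 <= Q^2*b*(2-b)/6 by apply: divr_ge0 => //; apply: mulr_ge0; [apply: mulr_ge0|]; nra.
  have : 0 <= Q^4*a^2*b^2/144 by apply: divr_ge0 => //; apply: mulr_ge0; [apply: mulr_ge0|]; nra.
  nra.
have hD0 : 0 <= 1-Q^2*b^2/12 by nra.
have hD1 : 1-Q^2*b^2/12 <= 1 by nra.
have hq0 : 0 <= Q^2*a^2*b by apply: mulr_ge0; [apply: mulr_ge0|]; nra.
have hD2 : 0 <= 1+a+Q^2*a^2*b/12 by lra.
have hq4 : Q^2*a^2 <= 4 by nra.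
have hq5 : Q^2*a^2*b <= 4 by nra.
have hD3 : 1+a+Q^2*a^2*b/12 <= 3 by lra.
have hD : D <= 3 by rewrite /D; nra.
have hk : dlt th/36*D <= dlt th/12.
  have : dlt th/36*D <= dlt th/36*3 by apply: ler_wpM2l => //; apply: divr_ge0.
  lra.
have hb : 0 <= b*F - dlt th/36*b*D.
  have -> : b*F - dlt th/36*b*D = b*(F - dlt th/36*D) by ring.
  apply: mulr_ge0; lra.
have : 0 <= Q*a^2*b*(b*F - dlt th/36*b*D).
  apply: mulr_ge0 => //; apply: mulr_ge0; [apply: mulr_ge0|]; nra.
lra.
Qed.
Lemma pers_uv (u v al : R) : 0 <= u -> u <= 2 -> 0 <= v -> v <= 2 -> al <= u + v ->
  al^2 + 8*al = 12 -> 129/100 <= al -> al <= 13/10 ->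
  0 <= 2*(u+v)^2*(1-u/3) - al*(1-u^2/12)*(u+2*v+u*v^2/12).
Proof.
move=> u0 u2 v0 v2 hs hal a1 a2.
have -> : 2*(u+v)^2*(1-u/3) - al*(1-u^2/12)*(u+2*v+u*v^2/12) =
  (u+v-al)*(u*(2-2*u/3-al*(u+8+al)/12) + v*(2*(1-u/3)-u*al/12)) + al*u^2*(u+2*v)/6 + al*u^3*v^2/144 - u*al*(al^2+8*al-12)/12.
  by field.
have hz : al^2+8*al-12 = 0 by rewrite hal subrr.
rewrite hz mulr0 mul0r subr0.
have c0 : 0 <= 2*(1-u/3)-u*al/12 by nra.
have h1 : 0 <= al*u^2*(u+2*v)/6 by apply: divr_ge0 => //; apply: mulr_ge0; nra.
have h2 : 0 <= al*u^3*v^2/144 by apply: divr_ge0 => //; apply: mulr_ge0; nra.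
have e1 : u*(2-2*u/3-al*(u+8+al)/12) = - u*(u-al)*(8+al)/12.
  apply/eqP; rewrite -subr_eq0; apply/eqP.
  have -> : u*(2-2*u/3-al*(u+8+al)/12) - - u*(u-al)*(8+al)/12 = -2*u*(al^2+8*al-12)/12 by field.
  by rewrite hz mulr0 mul0r.
rewrite e1.
have [ua|ua] := lerP u al.
  have h3 : 0 <= - u*(u-al)*(8+al)/12.
    have -> : - u*(u-al)*(8+al)/12 = u*(al-u)*(8+al)/12 by ring.
    apply: divr_ge0 => //; apply: mulr_ge0; [apply: mulr_ge0|]; lra.
  have h4 : 0 <= v*(2*(1-u/3)-u*al/12) by apply: mulr_ge0.
  have h5 : 0 <= (u+v-al) by lra.
  have := mulr_ge0 h5 (addr_ge0 h3 h4). lra.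
have k1 : (u-al)^2*(8+al) <= 2*al*u^2 by nra.
have k2 : (u-al)*(8+al) <= 4*al*u by nra.
have h4 : 0 <= (u+v-al)*(v*(2*(1-u/3)-u*al/12)).
  by apply: mulr_ge0; [lra|apply: mulr_ge0].
have h6 : 0 <= u*(2*al*u^2 - (u-al)^2*(8+al)) by apply: mulr_ge0; lra.
have h7 : 0 <= u*v*(4*al*u - (u-al)*(8+al)) by apply: mulr_ge0; [apply: mulr_ge0|]; lra.
have h8 : 0 <= al*u^3*v^2/144 by [].
have -> : (u + v - al) * (- u * (u - al) * (8 + al) / 12 + v * (2 * (1 - u / 3) - u * al / 12)) +
   al * u ^ 2 * (u + 2 * v) / 6 + al * u ^ 3 * v ^ 2 / 144 =
   (u+v-al)*(v*(2*(1-u/3)-u*al/12)) + (u*(2*al*u^2 - (u-al)^2*(8+al)))/12 + (u*v*(4*al*u - (u-al)*(8+al)))/12 + al*u^3*v^2/144 by field.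
lra.
Qed.

Lemma core_pers (a Q th al : R) : let b := 1 - a in let e := Q*a*b in
  let a1 := a^2 - e^2/12 in let e1 := 2*a*e - 2*e^2/3 in
  0 < a -> 0 < b -> 0 < Q -> Q*b <= 2 -> Q*a <= 2 -> th <= Q -> 0 <= th -> th <= al ->
  al^2 + 8*al = 12 -> 129/100 <= al -> al <= 13/10 ->
  th * (a1*(1-a1)) <= e1.
Proof.
move=> b e a1 e1 a0 b0 Q0 u2 v2 Qth th0 thal hal al1 al2.
have hab : b = 1 - a by []. have hb1 : b < 1 by lra. have ha1 : a < 1 by lra.
have [h1 h2 h3 h4] := core_id a Q.
rewrite -/b -/e -/a1 -/e1 in h1 h2 h3 h4.
set D := (1-Q^2*b^2/12)*(1+a+Q^2*a^2*b/12) in h4.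
set F := dlt Q/12 + Q^2*b*(2-b)/6 + Q^4*a^2*b^2/144 in h4.
have key : e1 - th * (a1*(1-a1)) = a^2*b*(2*Q*(1-Q*b/3) - th*D).
  rewrite h2 h1 h3 /D; ring.
have hQ : Q*b + Q*a = Q by rewrite hab; ring.
have u0 : 0 <= Q*b by apply: mulr_ge0; lra.
have v0 : 0 <= Q*a by apply: mulr_ge0; lra.
pose B := (1-(Q*b)^2/12)*(Q*b+2*(Q*a)+(Q*b)*(Q*a)^2/12).
have hB : 0 <= B.
  have uu : (Q*b)^2 <= 4 by nra.
  rewrite /B; apply: mulr_ge0; first by lra.
  have : 0 <= (Q*b)*(Q*a)^2/12 by apply: divr_ge0 => //; apply: mulr_ge0 => //; nra.
  lra.
have hG : forall x, Q*(2*Q*(1-Q*b/3) - x*D) = 2*(Q*b+Q*a)^2*(1-(Q*b)/3) - x*B.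
  move=> x; rewrite /B /D hab; ring.
have hW : 0 <= 2*Q*(1-Q*b/3) - th*D.
  rewrite -(pmulr_rge0 _ Q0) hG.
  have [aQ|Qa] := lerP al Q.
    have hs : al <= Q*b + Q*a by rewrite hQ.
    have hp := @pers_uv (Q*b) (Q*a) al u0 u2 v0 v2 hs hal al1 al2.
    have : 0 <= (al - th) * B by apply: mulr_ge0; lra.
    rewrite /B in hp *. lra.
  have hFQ : 0 <= F.
    rewrite /F /dlt.
    have : 0 <= Q^2*b*(2-b)/6 by apply: divr_ge0 => //; apply: mulr_ge0; [apply: mulr_ge0|]; nra.
    have : 0 <= Q^4*a^2*b^2/144 by apply: divr_ge0 => //; apply: mulr_ge0; [apply: mulr_ge0|]; nra.
    have : 0 <= (al - Q)*(Q+8+al) by apply: mulr_ge0; lra.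
    have -> : (al - Q)*(Q+8+al) = al^2 + 8*al - 8*Q - Q^2 by ring.
    rewrite hal. lra.
  have hGQ : 2*(Q*b+Q*a)^2*(1-(Q*b)/3) - Q*B = Q^2*(b*F).
    rewrite -hG -h4; ring.
  have : 0 <= Q^2*(b*F) by apply: mulr_ge0; [apply: sqr_ge0| apply: mulr_ge0; lra].
  have : 0 <= (Q - th) * B by apply: mulr_ge0; lra.
  lra.
have : 0 <= a^2*b*(2*Q*(1-Q*b/3) - th*D).
  apply: mulr_ge0 => //; apply: mulr_ge0; [apply: sqr_ge0|lra].
lra.
Qed.
End S.

Section S2.
Variable R : realType.
Definition Qs (a e : R) := e / ((1-a)*a).
Definition fa (a e : R) := a^2 - e^2/12.
Definition fe (a e : R) := 2*a*e - 2*e^2/3.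
Definition inv (a e : R) := [/\ 0 < e, e <= 2*a & e <= 2*(1-a)].

Lemma inv_props a e : inv a e ->
  [/\ 0 < a, 0 < 1 - a, Qs a e * (1-a) <= 2, Qs a e * a <= 2 & e = Qs a e * a * (1-a)].
Proof.
case=> e0 ea eb.
have a0 : 0 < a by lra. have b0 : 0 < 1 - a by lra.
have hQ : e = Qs a e * a * (1-a).
  rewrite /Qs; field; apply/andP; split; apply/eqP; lra.
split => //.
  have -> : Qs a e * (1-a) = e / a by rewrite /Qs; field; apply/andP; split; apply/eqP; lra.
  by rewrite ler_pdivrMr //; lra.
have -> : Qs a e * a = e / (1-a) by rewrite /Qs; field; apply/andP; split; apply/eqP; lra.
by rewrite ler_pdivrMr //; lra.
Qed.

Lemma Qs_pos a e : inv a e -> 0 < Qs a e.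
Proof.
move=> h; have [a0 b0 _ _ _] := inv_props h; case: h => e0 _ _.
by rewrite /Qs divr_gt0 // mulr_gt0.
Qed.

Lemma Qs_sym a e : Qs (1 - a) e = Qs a e.
Proof. rewrite /Qs; congr (_ / _); ring. Qed.

Lemma inv_sym a e : inv a e -> inv (1 - a) e.
Proof. by case=> h1 h2 h3; split => //; lra. Qed.

Lemma ser_inv a e : inv a e -> inv (fa a e) (fe a e).
Proof.
case=> e0 ea eb; rewrite /fa /fe; split.
- have : 0 < e * (2*a - 2*e/3) by apply: mulr_gt0 => //; lra.
  lra.
- have : 0 <= 2 * (a - e/2)^2 by apply: mulr_ge0 => //; apply: sqr_ge0.
  lra.
- pose p := a - e/2. pose t := 1 - a - e/2.
  have p0 : 0 <= p by rewrite /p; lra.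
  have t0 : 0 <= t by rewrite /t; lra.
  have hid : 2 * (1 - (a ^ 2 - e ^ 2 / 12)) - (2 * a * e - 2 * e ^ 2 / 3)
     = 2*(6*(e/3)^2 + t^2 + 2 * p * t + 6*(e/3)*t) by rewrite /p /t; field.
  have : 0 <= 6*(e/3)^2 + t^2 + 2 * p * t + 6*(e/3)*t.
    have h1 : 0 <= 6*(e/3)^2 by apply: mulr_ge0 => //; apply: sqr_ge0.
    have h2 : 0 <= t^2 by apply: sqr_ge0.
    have h3 : 0 <= 2 * p * t by apply: mulr_ge0 => //; apply: mulr_ge0.
    have h4 : 0 <= 6*(e/3)*t by apply: mulr_ge0 => //; apply: mulr_ge0 => //; lra.
    lra.
  lra.
Qed.

Lemma fe_ge a e : inv a e -> e^2/3 <= fe a e.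
Proof.
case=> e0 ea eb; rewrite /fe.
have : 0 <= e * (2*a - e) by apply: mulr_ge0; lra.
lra.
Qed.

Lemma ser_gain a e th : inv a e -> 0 <= th -> 0 <= dlt th -> Qs a e <= th ->
  Qs a e * (1 + dlt th/36 * (1-a)) <= Qs (fa a e) (fe a e).
Proof.
move=> hi th0 dth hQ.
have [a0 b0 u2 v2 he] := inv_props hi.
have Q0 := Qs_pos hi.
have := core_gain a0 b0 (ltW Q0) u2 v2 hQ dth.
have hi1 := ser_inv hi. have [a10 b10 _ _ _] := inv_props hi1.
move: he; rewrite /Qs; set Q := e / ((1-a)*a) => he.
have hA : fa a e = a^2 - (Q*a*(1-a))^2/12 by rewrite /fa -he.
have hE : fe a e = 2 * a * (Q * a * (1 - a)) - 2 * (Q * a * (1 - a)) ^ 2 / 3 by rewrite /fe -he.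
rewrite /Qs hA hE.
set A1 := a ^ 2 - (Q * a * (1 - a)) ^ 2 / 12.
set E1 := 2 * a * (Q * a * (1 - a)) - 2 * (Q * a * (1 - a)) ^ 2 / 3.
move=> h.
have hA1 : 0 < A1 by rewrite /A1 -he -/(fa a e).
have hB1 : 0 < 1 - A1 by rewrite /A1 -he -/(fa a e).
rewrite ler_pdivlMr; last by apply: mulr_gt0.
by rewrite (mulrC (1 - A1)).
Qed.
Lemma ser_pers a e th al : inv a e -> 0 <= th -> th <= al ->
  al^2 + 8*al = 12 -> 129/100 <= al -> al <= 13/10 -> th <= Qs a e ->
  th <= Qs (fa a e) (fe a e).
Proof.
move=> hi th0 thal hal al1 al2 hQ.
have [a0 b0 u2 v2 he] := inv_props hi.
have Q0 := Qs_pos hi.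
have := core_pers a0 b0 Q0 u2 v2 hQ th0 thal hal al1 al2.
have hi1 := ser_inv hi. have [a10 b10 _ _ _] := inv_props hi1.
move: he Q0 u2 v2 hQ; rewrite /Qs; set Q := e / ((1-a)*a) => he Q0 u2 v2 hQ.
have hA : fa a e = a^2 - (Q*a*(1-a))^2/12 by rewrite /fa -he.
have hE : fe a e = 2 * a * (Q * a * (1 - a)) - 2 * (Q * a * (1 - a)) ^ 2 / 3 by rewrite /fe -he.
rewrite hA hE.
set A1 := a ^ 2 - (Q * a * (1 - a)) ^ 2 / 12.
set E1 := 2 * a * (Q * a * (1 - a)) - 2 * (Q * a * (1 - a)) ^ 2 / 3.
move=> h.
have hA1 : 0 < A1 by rewrite /A1 -he -/(fa a e).
have hB1 : 0 < 1 - A1 by rewrite /A1 -he -/(fa a e).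
rewrite ler_pdivlMr; last by apply: mulr_gt0.
by rewrite (mulrC (1 - A1)).
Qed.

Lemma ser_slow a e : inv a e -> 1 - a < 1/6 ->
  3/2*(1-a) <= 1 - fa a e /\ 1/6 <= fa a e.
Proof.
case=> e0 ea eb hb; rewrite /fa; split.
  have : 0 <= e^2/12 by apply: divr_ge0 => //; apply: sqr_ge0.
  have : 0 <= (1-a)*(a - 1/2) by apply: mulr_ge0; lra.
  lra.
have : e^2 <= 1/9 by nra.
have : 25/36 <= a^2 by nra.
lra.
Qed.

Lemma oneKK (x : R) : 1 - (1 - x) = x. Proof. ring. Qed.

Definition pa (a e : R) := 1 - fa (1 - a) e.
Definition pe (a e : R) := fe (1 - a) e.

Lemma par_inv a e : inv a e -> inv (pa a e) (pe a e).
Proof.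
move=> h; have := ser_inv (inv_sym h); rewrite /pa /pe => h2.
exact: inv_sym h2.
Qed.

Lemma pe_ge a e : inv a e -> e^2/3 <= pe a e.
Proof. by move=> h; apply: fe_ge (inv_sym h). Qed.

Lemma par_gain a e th : inv a e -> 0 <= th -> 0 <= dlt th -> Qs a e <= th ->
  Qs a e * (1 + dlt th/36 * a) <= Qs (pa a e) (pe a e).
Proof.
move=> h th0 dth hQ.
have := ser_gain (inv_sym h) th0 dth; rewrite !Qs_sym => /(_ hQ).
by rewrite oneKK.
Qed.

Lemma par_pers a e th al : inv a e -> 0 <= th -> th <= al ->
  al^2 + 8*al = 12 -> 129/100 <= al -> al <= 13/10 -> th <= Qs a e ->
  th <= Qs (pa a e) (pe a e).
Proof.
move=> h th0 thal hal al1 al2 hQ.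
have := ser_pers (inv_sym h) th0 thal hal al1 al2; rewrite !Qs_sym => /(_ hQ).
by [].
Qed.

Lemma par_slow a e : inv a e -> a < 1/6 ->
  3/2*a <= pa a e /\ 1/6 <= 1 - pa a e.
Proof.
move=> h ha.
have := ser_slow (inv_sym h); rewrite oneKK => /(_ ha).
by rewrite /pa oneKK.
Qed.
End S2.

Section S3.
Variable R : realType.
Definition good (V : tec R) := [/\ valid_tec V, balanced V & 0 < tq V].
Definition aV (V : tec R) := tp V + 3 * tq V / 2.
Definition eV (V : tec R) := 3 * tq V.

Lemma good_all V : good V ->
  [/\ inv (aV V) (eV V), tec_Q V = Qs (aV V) (eV V) & tec_H V = 1 - aV V].
Proof.
case: V => p q r s t; rewrite /good /valid_tec /balanced /aV /eV /tec_Q /tec_E /tec_H /=.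
case=> [[p0 [q0' [r0 [s0 [t0 hs]]]]] [hqr hrs] q0].
subst r s.
have hH : (q + q + q) / 2 + t = 1 - (p + 3 * q / 2) by lra.
split.
- split; lra.
- by rewrite /Qs hH; congr (_ / (_ * _)); lra.
- exact: hH.
Qed.

Lemma good_ser V : good V ->
  [/\ good (serial_child V), aV (serial_child V) = fa (aV V) (eV V) &
      eV (serial_child V) = fe (aV V) (eV V)].
Proof.
case: V => p q r s t; rewrite /good /valid_tec /balanced /aV /eV /=.
case=> [[p0 [q0' [r0 [s0 [t0 hs]]]]] [hqr hrs] q0].
subst r s.
split; [|rewrite /fa; by field|rewrite /fe; by field].
have hq1 : 0 < p * q + q * q + q * p.
  have : 0 <= p * q by apply: mulr_ge0; lra.
  have : 0 < q * q by apply: mulr_gt0.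
  lra.
split.
- split; first exact: sqr_ge0.
  split; first lra. split; first lra. split; first lra.
  split; last ring.
  have -> : 1 - (p ^+ 2 + (p * q + q * q + q * p) + (p * q + q * q + q * p) + (p * q + q * q + q * p))
     = 6*q^2 + t^2 + 2 * p * t + 6*q*t.
    have -> : p = 1 - q - q - q - t by lra.
    ring.
  have : 0 <= 6*q^2 by apply: mulr_ge0 => //; apply: sqr_ge0.
  have : 0 <= t^2 by apply: sqr_ge0.
  have : 0 <= 2 * p * t by apply: mulr_ge0 => //; apply: mulr_ge0; lra.
  have : 0 <= 6*q*t by apply: mulr_ge0; [apply: mulr_ge0|]; lra.
  lra.
- by split.
- exact: hq1.
Qed.

Lemma good_par V : good V ->
  [/\ good (parallel_child V), aV (parallel_child V) = pa (aV V) (eV V) &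
      eV (parallel_child V) = pe (aV V) (eV V)].
Proof.
case: V => p q r s t; rewrite /good /valid_tec /balanced /aV /eV /=.
case=> [[p0 [q0' [r0 [s0 [t0 hs]]]]] [hqr hrs] q0].
subst r s.
have hp : p = 1 - q - q - q - t by lra.
split; [|rewrite /pa /fa hp; by field|rewrite /pe /fe hp; by field].
have hq1 : 0 < t * q + q * q + q * t.
  have : 0 <= t * q by apply: mulr_ge0; lra.
  have : 0 < q * q by apply: mulr_gt0.
  lra.
split.
- split.
    have -> : 1 - (t * q + q * q + q * t + (t * q + q * q + q * t) + (t * q + q * q + q * t) + t ^+ 2)
       = 6*q^2 + p^2 + 2 * p * t + 6 * q * p.
      rewrite hp; ring.
    have : 0 <= 6*q^2 by apply: mulr_ge0 => //; apply: sqr_ge0.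
    have : 0 <= p^2 by apply: sqr_ge0.
    have : 0 <= 2 * p * t by apply: mulr_ge0 => //; apply: mulr_ge0; lra.
    have : 0 <= 6 * q * p by apply: mulr_ge0; [apply: mulr_ge0|]; lra.
    lra.
  split; first lra. split; first lra. split; first lra.
  split; first exact: sqr_ge0.
  ring.
- by split.
- exact: hq1.
Qed.
End S3.

Section S4.
Variable R : realType.
Definition child (V C : tec R) := C = serial_child V \/ C = parallel_child V.

Lemma child_good (V C : tec R) : good V -> child V C -> good C /\ (tq V)^+2 <= tq C.
Proof.
move=> g [->|->].
  have [g1 ha he] := good_ser g; split => //.
  have [hi _ _] := good_all g.
  have := fe_ge hi; rewrite -he /eV => h.
  have : 3 * (tq V)^+2 <= 3 * tq (serial_child V) by lra.
  lra.
have [g1 ha he] := good_par g; split => //.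
have [hi _ _] := good_all g.
have := pe_ge hi; rewrite -he /eV => h.
have : 3 * (tq V)^+2 <= 3 * tq (parallel_child V) by lra.
lra.
Qed.

Lemma H_bounds (V : tec R) : good V -> 3/2 * tq V <= tec_H V /\ 3/2 * tq V <= 1 - tec_H V.
Proof.
move=> g; have [[e0 ea eb] _ ->] := good_all g; move: ea eb; rewrite /eV; split; lra.
Qed.

Lemma Q_pos (V : tec R) : good V -> 0 < tec_Q V.
Proof. by move=> g; have [hi -> _] := good_all g; apply: Qs_pos. Qed.

Lemma child_pers (V C : tec R) th al : good V -> child V C -> 0 <= th -> th <= al ->
  al^2 + 8*al = 12 -> 129/100 <= al -> al <= 13/10 -> th <= tec_Q V -> th <= tec_Q C.
Proof.
move=> g [->|->] th0 thal hal al1 al2; have [hi -> _] := good_all g => hQ.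
  have [g1 ha he] := good_ser g; have [_ -> _] := good_all g1; rewrite ha he.
  exact: ser_pers hi th0 thal hal al1 al2 hQ.
have [g1 ha he] := good_par g; have [_ -> _] := good_all g1; rewrite ha he.
exact: par_pers hi th0 thal hal al1 al2 hQ.
Qed.

Lemma child_step (V C : tec R) th : good V -> child V C -> 0 <= th -> 0 <= dlt th -> tec_Q V <= th ->
  tec_Q V <= tec_Q C /\
  (tec_Q V * (1 + dlt th/216) <= tec_Q C \/
   (tec_H V < 1/6 /\ 3/2 * tec_H V <= tec_H C /\ 1/6 <= 1 - tec_H C) \/
   (1 - tec_H V < 1/6 /\ 3/2 * (1 - tec_H V) <= 1 - tec_H C /\ 1/6 <= tec_H C)).
Proof.
move=> g [->|->] th0 dth; have [hi hQ hH] := good_all g; rewrite hQ hH => hQt.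
  have [g1 ha he] := good_ser g; have [_ -> ->] := good_all g1; rewrite ha he.
  have hg := ser_gain hi th0 dth hQt.
  have Q0 := Qs_pos hi.
  have [a0 b0 _ _ _] := inv_props hi.
  have hk : 0 <= dlt th / 36 * (1 - aV V) by apply: mulr_ge0; [apply: divr_ge0|lra].
  split.
    have : 0 <= Qs (aV V) (eV V) * (dlt th / 36 * (1 - aV V)) by apply: mulr_ge0; lra.
    lra.
  have [hb|hb] := lerP (1/6) (1 - aV V).
    left; apply: le_trans hg; apply: ler_wpM2l; first lra.
    have : dlt th / 36 * (1/6) <= dlt th / 36 * (1 - aV V) by apply: ler_wpM2l => //; apply: divr_ge0.
    lra.
  right; left; have [s1 s2] := ser_slow hi hb; split => //; split; lra.
have [g1 ha he] := good_par g; have [_ -> ->] := good_all g1; rewrite ha he.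
have hg := par_gain hi th0 dth hQt.
have Q0 := Qs_pos hi.
have [a0 b0 _ _ _] := inv_props hi.
have hk : 0 <= dlt th / 36 * aV V by apply: mulr_ge0; [apply: divr_ge0|lra].
split.
  have : 0 <= Qs (aV V) (eV V) * (dlt th / 36 * aV V) by apply: mulr_ge0; lra.
  lra.
have [hb|hb] := lerP (1/6) (aV V).
  left; apply: le_trans hg; apply: ler_wpM2l; first lra.
  have : dlt th / 36 * (1/6) <= dlt th / 36 * aV V by apply: ler_wpM2l => //; apply: divr_ge0.
  lra.
right; right; have [s1 s2] := par_slow hi hb; split; first lra; split; lra.
Qed.

Lemma desc0_inv (V Y : tec R) : descendant V 0 Y -> Y = V.
Proof. by move=> h; inversion h. Qed.

Lemma desc_front (V X : tec R) k : descendant V k.+1 X -> exists C, child V C /\ descendant C k X.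
Proof.
move=> h.
suff : forall n Y, descendant V n Y -> forall k, n = k.+1 -> exists C, child V C /\ descendant C k Y.
  by move/(_ _ _ h k erefl).
move=> n Y; elim => {n Y} [|n Y hY IH|n Y hY IH] // [|k'] [ek].
- subst n; rewrite (desc0_inv hY); exists (serial_child V); split; [by left|exact: desc0].
- subst n; have [C [hC hd]] := IH k' erefl; exists C; split => //; exact: descS.
- subst n; rewrite (desc0_inv hY); exists (parallel_child V); split; [by right|exact: desc0].
- subst n; have [C [hC hd]] := IH k' erefl; exists C; split => //; exact: descP.
Qed.

Lemma desc_pers (V : tec R) th al k X : good V -> 0 <= th -> th <= al ->
  al^2 + 8*al = 12 -> 129/100 <= al -> al <= 13/10 -> th <= tec_Q V ->
  descendant V k X -> good X /\ th <= tec_Q X.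
Proof.
move=> g th0 thal hal al1 al2 hQ; elim => [|n Y _ [gY hY]|n Y _ [gY hY]] //.
- have hc : child Y (serial_child Y) by left.
  split; first by case: (child_good gY hc).
  exact: child_pers gY hc th0 thal hal al1 al2 hY.
- have hc : child Y (parallel_child Y) by right.
  split; first by case: (child_good gY hc).
  exact: child_pers gY hc th0 thal hal al1 al2 hY.
Qed.

Lemma bernoulli (x : R) n : 0 <= x -> 1 + n%:R * x <= (1 + x) ^+ n.
Proof.
move=> x0; elim: n => [|n IH]; first by rewrite expr0 mul0r addr0.
rewrite exprS -natr1.
have : (1 + x) * (1 + n%:R * x) <= (1 + x) * (1 + x) ^+ n by apply: ler_wpM2l => //; lra.
have : 0 <= n%:R * x * x by apply: mulr_ge0 => //; apply: mulr_ge0.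
lra.
Qed.
End S4.

Section S5.
Variable R : realType.
Variables (th al : R).
Hypotheses (th0 : 0 < th) (thal : th <= al) (hal : al^2 + 8*al = 12)
  (al1 : 129/100 <= al) (al2 : al <= 13/10) (dth : 0 < dlt th).
Let c1 := 1 + dlt th / 216.

Definition okr (r : nat) (V : tec R) :=
  1/6 <= (3/2)^+r * tec_H V /\ 1/6 <= (3/2)^+r * (1 - tec_H V).

Lemma sq_le (nu : R) (V C : tec R) : 0 < nu -> nu <= tq V -> good V -> child V C -> nu^+2 <= tq C.
Proof.
move=> nu0 hnu g hc; have [_ h] := child_good g hc.
apply: le_trans h; nra.
Qed.

Lemma claim j : forall nu : R, 0 < nu -> exists M : nat, forall V : tec R, good V -> nu <= tq V ->
  th <= tec_Q V * c1^+j -> forall k X, (M <= k)%N -> descendant V k X -> th <= tec_Q X.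
Proof.
have c10 : 1 <= c1 by rewrite /c1; have := dth; lra.
elim: j => [|j IHj] nu nu0.
  exists 0%N => V g _; rewrite expr0 mulr1 => hQ k X _ hd.
  by case: (desc_pers g (ltW th0) thal hal al1 al2 hQ hd).
have inner : forall r (nu : R), 0 < nu -> exists M : nat, forall V : tec R, good V -> nu <= tq V ->
  th <= tec_Q V * c1^+j.+1 -> okr r V ->
  forall k X, (M <= k)%N -> descendant V k X -> th <= tec_Q X.
  elim => [|r IHr] nu' nu'0.
    have [M0 HM0] := IHj (nu'^+2) (exprn_gt0 2 nu'0).
    exists M0.+1 => V g hnu hQ [o1 o2] [//|k] X hk hd.
    have [hth|hlt] := lerP th (tec_Q V).
      by case: (desc_pers g (ltW th0) thal hal al1 al2 hth hd).
    have [C [hC hdC]] := desc_front hd.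
    have [gC _] := child_good g hC.
    have [_ hs] := child_step g hC (ltW th0) (ltW dth) (ltW hlt).
    rewrite expr0 mul1r in o1 o2.
    case: hs => [hf|[[h1 _]|[h1 _]]]; last 2 first.
    - lra.
    - lra.
    apply: (HM0 C gC (sq_le nu'0 hnu g hC) _ k X hk hdC).
    apply: le_trans hQ _; rewrite exprS mulrA; apply: ler_wpM2r; last by rewrite /c1 in hf *.
    by apply: exprn_ge0; lra.
  have [M0 HM0] := IHj (nu'^+2) (exprn_gt0 2 nu'0).
  have [M1 HM1] := IHr (nu'^+2) (exprn_gt0 2 nu'0).
  exists (maxn M0 M1).+1 => V g hnu hQ [o1 o2] [//|k] X hk hd.
  have [hth|hlt] := lerP th (tec_Q V).
    by case: (desc_pers g (ltW th0) thal hal al1 al2 hth hd).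
  have [C [hC hdC]] := desc_front hd.
  have [gC _] := child_good g hC.
  have [hQC hs] := child_step g hC (ltW th0) (ltW dth) (ltW hlt).
  have hk' : (maxn M0 M1 <= k)%N by [].
  have pw0 : 0 <= (3/2 : R)^+r by apply: exprn_ge0; lra.
  case: hs => [hf|[[h1 [h2 h3]]|[h1 [h2 h3]]]].
  - apply: (HM0 C gC (sq_le nu'0 hnu g hC) _ k X _ hdC); last first.
      by apply: leq_trans hk'; apply: leq_maxl.
    apply: le_trans hQ _; rewrite exprS mulrA; apply: ler_wpM2r; last by rewrite /c1 in hf *.
    by apply: exprn_ge0; lra.
  - apply: (HM1 C gC (sq_le nu'0 hnu g hC) _ _ k X _ hdC).
    + apply: le_trans hQ _; apply: ler_wpM2r => //; apply: exprn_ge0; lra.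
    + split.
        rewrite exprS in o1.
        have : (3/2)^+r * (3/2 * tec_H V) <= (3/2)^+r * tec_H C by apply: ler_wpM2l.
        lra.
      have : (3/2)^+r * (1/6) <= (3/2)^+r * (1 - tec_H C) by apply: ler_wpM2l.
      have : 1 <= (3/2 : R)^+r by apply: exprn_ege1; lra.
      nra.
    + by apply: leq_trans hk'; apply: leq_maxr.
  - apply: (HM1 C gC (sq_le nu'0 hnu g hC) _ _ k X _ hdC).
    + apply: le_trans hQ _; apply: ler_wpM2r => //; apply: exprn_ge0; lra.
    + split.
        have : (3/2)^+r * (1/6) <= (3/2)^+r * tec_H C by apply: ler_wpM2l.
        have : 1 <= (3/2 : R)^+r by apply: exprn_ege1; lra.
        nra.
      rewrite exprS in o2.
      have : (3/2)^+r * (3/2 * (1 - tec_H V)) <= (3/2)^+r * (1 - tec_H C) by apply: ler_wpM2l.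
      lra.
    + by apply: leq_trans hk'; apply: leq_maxr.
pose r := Num.Def.archi_bound (1 / nu).
have hr : 1 / nu < r%:R by apply: archi_boundP; apply: divr_ge0; lra.
have [M HM] := inner r nu nu0.
exists M => V g hnu hQ k X hk hd.
apply: (HM V g hnu hQ _ k X hk hd).
have [hb1 hb2] := H_bounds g.
have hp : 1 + r%:R * (1/2) <= (1 + 1/2 : R)^+r by apply: bernoulli; lra.
rewrite /okr; have -> : (3/2 : R) = 1 + 1/2 by lra.
have hr2 : 1 <= r%:R * nu.
  by move: hr; rewrite ltr_pdivrMr // => /ltW.
split.
  have : (1 + r%:R * (1 / 2)) * (3/2 * nu) <= (1 + 1/2)^+r * tec_H V.
    have : 0 <= r%:R :> R by apply: ler0n.
    move=> hr0; apply: ler_pM => //; lra.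
  nra.
have : (1 + r%:R * (1 / 2)) * (3/2 * nu) <= (1 + 1/2)^+r * (1 - tec_H V).
  have : 0 <= r%:R :> R by apply: ler0n.
  move=> hr0; apply: ler_pM => //; lra.
nra.
Qed.
End S5.


Unset Implicit Arguments.
Theorem mainTheorem8 (R : realType) (eps : R) (W : tec R) :
  0 < eps -> valid_tec W -> balanced W -> 0 < tec_Q W ->
  exists m : nat, (0 < m)%N /\
    forall (n : nat) (W' : tec R), (m <= n)%N -> descendant W n W' ->
      2 * Num.sqrt 7 - 4 - eps <= tec_Q W'.
Proof.
move=> e0 hv hb hQ.
have s0 : 0 <= Num.sqrt (7 : R) := sqrtr_ge0 7.
have s2 : Num.sqrt (7 : R) ^+ 2 = 7 by apply: sqr_sqrtr; lra.
move: s0 s2; set s := Num.sqrt (7 : R) => s0 s2.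
set al := 2 * s - 4.
have hal : al^2 + 8*al = 12.
  have -> : al^2 + 8*al = 4 * s^+2 - 16 by rewrite /al; ring.
  rewrite s2; lra.
have al1 : 129/100 <= al.
  have [h|h] := lerP (2645/1000) s; first by rewrite /al; lra.
  have : s^+2 < 7 by nra.
  lra.
have al2 : al <= 13/10.
  have [h|h] := lerP s (265/100); first by rewrite /al; lra.
  have : 7 < s^+2 by nra.
  lra.
pose m := Num.min eps al.
have m1 : m <= eps by rewrite /m ge_min lexx.
have m2 : m <= al by rewrite /m ge_min lexx orbT.
have m0 : 0 < m by rewrite /m lt_min e0 /=; lra.
pose th := al - m/2.
have th0 : 0 < th by rewrite /th; lra.
have thal : th <= al by rewrite /th; lra.
have thl : al - eps <= th by rewrite /th; lra.
have dth : 0 < dlt th.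
  have -> : dlt th = (al - th) * (th + 8 + al).
    have : (al - th) * (th + 8 + al) = al^2 + 8*al - 8*th - th^2 by ring.
    rewrite hal /dlt => ->; ring.
  have thlt : th < al by rewrite /th; lra.
  apply: mulr_gt0; lra.
have g : good W.
  split => //.
  case: hv => _ [q0 _].
  rewrite lt_def q0 andbT; apply/eqP => hq.
  move: hQ; rewrite /tec_Q /tec_E.
  case: hb => <- <-; rewrite hq !addr0 mul0r; lra.
pose k' := dlt th / 216.
have k0 : 0 < k' by rewrite /k'; apply: divr_gt0.
pose j := Num.Def.archi_bound (th / (tec_Q W * k')).
have hj : th / (tec_Q W * k') < j%:R.
  by apply: archi_boundP; apply: divr_ge0; [lra|apply: mulr_ge0; lra].
have hjQ : th <= tec_Q W * (1 + dlt th / 216)^+j.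
  have hb1 := bernoulli j (ltW k0).
  move: hj; rewrite ltr_pdivrMr; last by apply: mulr_gt0.
  move=> hj.
  have : tec_Q W * (1 + j%:R * k') <= tec_Q W * (1 + k')^+j by apply: ler_wpM2l; lra.
  have : 0 <= tec_Q W by lra.
  rewrite /k' => ? ?; nra.
have [_ _ q0] := g.
have [M HM] := claim th0 thal hal al1 al2 dth j q0.
exists M.+1; split => // n W' hn hd.
have := HM W g (lexx _) hjQ n W' (ltnW hn) hd.
rewrite -/al; lra.
Qed.
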